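(* Let $I$ be a stable matching instance with $k$-range preferences and $n$ men and $n$ women. Then each agent in $I$ has at most $5k - 4$ stable partners. In particular, each agent can appear in at most $5k - 5$ rotations.
   Context: An SM instance $I$ has men and women with complete strict preference lists; $P_a(b)$ is the rank $a$ assigns $b$. For an agent $a$, $\min\mathrm{rank}(a)$ and $\max\mathrm{rank}(a)$ are the minimum and maximum of $P_b(a)$ over agents $b$ of the opposite sex; $I$ has $k$-range preferences if $\max\mathrm{rank}(a) - \min\mathrm{rank}(a) \leq k-1$ for all $a$. A stable partner of $a$ is an agent matched to $a$ in some stable matching. A rotation of $I$ is a circular list $(m_1,w_1),\ldots,(m_\ell,w_\ell)$ of pairs of some stable matching $\mu$ such that $w_{i+1}$ is the first woman after $w_i$ on $m_i$'s list who prefers $m_i$ to her partner $m_{i+1}$ in $\mu$. *)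

(* Defs.v *)
From mathcomp Require Import all_boot all_fingroup.
Set Implicit Arguments. Unset Strict Implicit. Unset Printing Implicit Defensive.

(* An SM instance with n men and n women, both indexed by 'I_n.
   [prefM I m] is man m's complete strict preference list, given as the
   rank function w |-> P_m(w) (0 = most preferred); likewise [prefW I w]
   gives P_w(m).  Being a permutation = complete and strict. *)
Record SMI (n : nat) := MkSMI {
  prefM : 'I_n -> {perm 'I_n};
  prefW : 'I_n -> {perm 'I_n} }.

Section SM.
Variables (n : nat) (I : SMI n).

Definition PM (m w : 'I_n) : nat := prefM I m w.
Definition PW (w m : 'I_n) : nat := prefW I w m.

Definition minrankM (m : 'I_n) : nat := \big[minn/n]_(w : 'I_n) PW w m.
Definition maxrankM (m : 'I_n) : nat := \max_(w : 'I_n) PW w m.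
Definition minrankW (w : 'I_n) : nat := \big[minn/n]_(m : 'I_n) PM m w.
Definition maxrankW (w : 'I_n) : nat := \max_(m : 'I_n) PM m w.

Definition k_range (k : nat) : Prop :=
  (forall m : 'I_n, maxrankM m - minrankM m <= k - 1) /\
  (forall w : 'I_n, maxrankW w - minrankW w <= k - 1).

(* A (perfect) matching: man m is matched to woman mu m, and woman w to
   man mu^-1 w. *)
Definition blocking (mu : {perm 'I_n}) (m w : 'I_n) : bool :=
  (PM m w < PM m (mu m)) && (PW w m < PW w ((mu^-1)%g w)).

Definition stable (mu : {perm 'I_n}) : bool :=
  [forall m : 'I_n, forall w : 'I_n, ~~ blocking mu m w].

Definition stable_partners_of_man (m : 'I_n) : {set 'I_n} :=
  [set w : 'I_n | [exists mu : {perm 'I_n}, stable mu && (mu m == w)]].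
Definition stable_partners_of_woman (w : 'I_n) : {set 'I_n} :=
  [set m : 'I_n | [exists mu : {perm 'I_n}, stable mu && (mu m == w)]].

Definition w_prefers_to_partner (mu : {perm 'I_n}) (w m : 'I_n) : bool :=
  PW w m < PW w ((mu^-1)%g w).

Definition rot_step (mu : {perm 'I_n}) (p q : 'I_n * 'I_n) : bool :=
  let: (mi, wi) := p in let: (_, wj) := q in
  [&& PM mi wi < PM mi wj, w_prefers_to_partner mu wj mi &
      [forall w : 'I_n, (PM mi wi < PM mi w < PM mi wj) ==>
                          ~~ w_prefers_to_partner mu w mi]].

(* A rotation, represented by a circular list s = [(m_1,w_1);...;(m_l,w_l)]
   of distinct pairs (the successor of the last pair is the first one). *)
Definition is_rotation (s : seq ('I_n * 'I_n)) : Prop :=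
  exists mu : {perm 'I_n},
    [/\ stable mu, 0 < size s, uniq s,
        all (fun p => mu p.1 == p.2) s &
        all (fun pq => rot_step mu pq.1 pq.2) (zip s (rot 1 s))].

Definition same_rotation (s1 s2 : seq ('I_n * 'I_n)) : bool :=
  [exists i : 'I_(size s1).+1, rot i s1 == s2].

End SM.

(* Main.v *)
Require Import Defs.
From mathcomp Require Import all_boot all_fingroup.
From mathcomp Require Import zify.
Set Implicit Arguments. Unset Strict Implicit. Unset Printing Implicit Defensive.

Lemma card_lt_nat (T : finType) (A : {set T}) (g : T -> nat) N :
  {in A &, injective g} -> (forall a, a \in A -> g a < N) -> #|A| <= N.
Proof.
move=> ginj gN; rewrite cardE.
have -> : N = size (iota 0 N) by rewrite size_iota.
rewrite -(size_map g).
apply: uniq_leq_size.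
  rewrite map_inj_in_uniq ?enum_uniq // => x y; rewrite !mem_enum; exact: ginj.
move=> v /mapP [a]; rewrite mem_enum => aA ->; rewrite mem_iota /= add0n.
exact: gN.
Qed.

Lemma card_ge_rank n (p : {perm 'I_n}) (j : nat) : j <= n ->
  j <= #|[set x | p x < j]|.
Proof.
move=> hj.
pose f (i : 'I_j) : 'I_n := (p^-1)%g (widen_ord hj i).
have finj : injective f.
  by move=> a b; rewrite /f => /perm_inj /(congr1 val) /= /val_inj.
rewrite -[j in j <= _]card_ord -cardsT -(card_imset _ finj).
apply: subset_leq_card; apply/subsetP => x /imsetP [i _ ->].
by rewrite inE /f permKV /=.
Qed.

Lemma bigmin_le n (F : 'I_n -> nat) i : \big[minn/n]_(j : 'I_n) F j <= F i.
Proof.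
have : i \in index_enum 'I_n by rewrite mem_index_enum.
elim: (index_enum 'I_n) => [|a r IH] //; rewrite big_cons in_cons.
case/orP => [/eqP <-|/IH h]; first exact: geq_minl.
exact: leq_trans (geq_minr _ _) h.
Qed.

Section Gen.
Variables (n : nat) (I : SMI n).

Lemma PM_inj m : injective (PM I m).
Proof. by move=> a b /val_inj /perm_inj. Qed.
Lemma PW_inj w : injective (PW I w).
Proof. by move=> a b /val_inj /perm_inj. Qed.

Lemma PM_lt m w : PM I m w < n. Proof. exact: ltn_ord. Qed.

Lemma stableP mu : stable I mu -> forall m w, ~~ blocking I mu m w.
Proof. by move=> /forallP H m w; have /forallP := H m; apply. Qed.

Lemma rankM_bounds k : k_range I k -> forall w m,
  minrankM I m <= PW I w m <= minrankM I m + (k - 1).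
Proof.
case=> hM _ w m; apply/andP; split; first exact: bigmin_le.
have := hM m; have : PW I w m <= maxrankM I m.
  by rewrite /maxrankM (bigD1 w) //= leq_maxl.
lia.
Qed.

Lemma rankW_bounds k : k_range I k -> forall m w,
  minrankW I w <= PM I m w <= minrankW I w + (k - 1).
Proof.
case=> _ hW m w; apply/andP; split; first exact: bigmin_le.
have := hW w; have : PM I m w <= maxrankW I w.
  by rewrite /maxrankW (bigD1 m) //= leq_maxl.
lia.
Qed.

Lemma window k : k_range I k -> forall mu, stable I mu -> forall m,
  minrankM I m <= PM I m (mu m) + (k - 1) + (k - 1) /\
  PM I m (mu m) <= minrankM I m + (k - 1) + (k - 1).
Proof.
move=> hk mu st m; have nb := stableP st.
have bM := rankM_bounds hk; have bW := rankW_bounds hk.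
set w := mu m; set r := PM I m w.
split.
-
  have h1 : PW I w m <= #|[set x | prefW I w x < PW I w m]|.
    by apply: card_ge_rank; apply: ltnW; apply: ltn_ord.
  have h2 : #|[set x | prefW I w x < PW I w m]| <= r + (k - 1) + (k - 1).
    apply: (@card_lt_nat _ _ (fun x => PM I m (mu x))).
      by move=> x y _ _ /PM_inj /perm_inj.
    move=> x; rewrite inE => hx.
    have hxm : x != m by apply: contraTneq hx => ->; rewrite ltnn.
    have hlt : PM I x (mu x) < PM I x w.
      have := nb x w; rewrite /blocking permK.
      change (prefW I w x < PW I w m) with (PW I w x < PW I w m) in hx.
      rewrite hx andbT -leqNgt leq_eqVlt => /orP [/eqP /PM_inj e|//].
      have emx : m = x by apply: (@perm_inj _ mu); rewrite -/w; move: e => /= ->.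
      by rewrite emx eqxx in hxm.
    have := bW x (mu x); have := bW m (mu x); have := bW x w; have := bW m w.
    rewrite -/r; lia.
  have := bM w m; lia.
-
  have h1 : r <= #|[set x | prefM I m x < r]|.
    by apply: card_ge_rank; apply: ltnW; apply: ltn_ord.
  have h2 : #|[set x | prefM I m x < r]| <= minrankM I m + (k - 1) + (k - 1).
    apply: (@card_lt_nat _ _ (fun x => PW I w ((mu^-1)%g x))).
      by move=> x y _ _ /PW_inj /perm_inj.
    move=> x; rewrite inE => hx.
    change (prefM I m x < r) with (PM I m x < r) in hx.
    have hxw : x != w by apply: contraTneq hx => ->; rewrite ltnn.
    have hlt : PW I x ((mu^-1)%g x) < PW I x m.
      have := nb m x; rewrite /blocking hx /=.
      rewrite -leqNgt leq_eqVlt => /orP [/eqP /PW_inj e|//].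
      by move: hxw; rewrite /w -e permKV eqxx.
    have := bM x ((mu^-1)%g x); have := bM w ((mu^-1)%g x); have := bM x m.
    lia.
  lia.
Qed.

End Gen.

Definition swapI n (I : SMI n) := MkSMI (prefW I) (prefM I).

Section Swap.
Variables (n : nat) (I : SMI n).

Lemma stable_swap mu : stable (swapI I) (mu^-1)%g = stable I mu.
Proof.
have bl : forall a b, blocking (swapI I) (mu^-1)%g a b = blocking I mu b a.
  by move=> a b; rewrite /blocking invgK andbC.
apply/forallP/forallP => H a; apply/forallP => b.
  by rewrite -bl; have /forallP := H b; apply.
by rewrite bl; have /forallP := H b; apply.
Qed.

Lemma k_range_swap k : k_range I k -> k_range (swapI I) k.
Proof. by case=> a b; split. Qed.

Lemma partners_swap w :
  stable_partners_of_woman I w = stable_partners_of_man (swapI I) w.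
Proof.
apply/setP => m; rewrite !inE; apply/existsP/existsP.
  case=> mu /andP [st /eqP e]; exists (mu^-1)%g.
  by rewrite stable_swap st -e permK eqxx.
case=> nu /andP [st /eqP e]; exists (nu^-1)%g.
by rewrite -stable_swap invgK st -e permK eqxx.
Qed.

Lemma window_w k : k_range I k -> forall mu, stable I mu -> forall w,
  minrankW I w <= PW I w ((mu^-1)%g w) + (k - 1) + (k - 1) /\
  PW I w ((mu^-1)%g w) <= minrankW I w + (k - 1) + (k - 1).
Proof.
move=> hk mu st w.
have := @window _ (swapI I) k (k_range_swap hk) (mu^-1)%g.
rewrite stable_swap => /(_ st w); done.
Qed.

End Swap.

Lemma count_man n (I : SMI n) k : 0 < k -> k_range I k -> forall m,
  #|stable_partners_of_man I m| <= 5 * k - 4.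
Proof.
move=> k0 hk m.
apply: (@card_lt_nat _ _ (fun w => PM I m w + (k - 1) + (k - 1) - minrankM I m)).
  move=> w1 w2; rewrite !inE => /existsP [mu1 /andP [st1 /eqP e1]].
  move=> /existsP [mu2 /andP [st2 /eqP e2]].
  have := window hk st1 m; have := window hk st2 m; rewrite e1 e2 => h2 h1 e.
  apply: (@PM_inj _ I m); lia.
move=> w; rewrite inE => /existsP [mu /andP [st /eqP e]].
have := window hk st m; rewrite e; lia.
Qed.

Lemma count_woman n (I : SMI n) k : 0 < k -> k_range I k -> forall w,
  #|stable_partners_of_woman I w| <= 5 * k - 4.
Proof.
move=> k0 hk w; rewrite partners_swap; exact: count_man k0 (k_range_swap hk) w.
Qed.

Lemma zip_path (T : Type) (r : rel T) x s y :
  all (fun pq => r pq.1 pq.2) (zip (x :: s) (rcons s y)) = path r x (rcons s y).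
Proof. by elim: s x => [|z s IH] x //=; rewrite IH. Qed.

Lemma zip_next (T : eqType) (r : rel T) s :
  all (fun pq => r pq.1 pq.2) (zip s (rot 1 s)) -> forall p, p \in s -> r p (next s p).
Proof.
case: s => [|x s] //; rewrite rot1_cons zip_path => H p hp.
by apply: next_cycle hp.
Qed.

Section Rot.
Variables (n : nat) (I : SMI n).
Local Notation PM := (PM I).
Local Notation PW := (PW I).

Lemma rotP s : is_rotation I s -> exists mu, [/\ stable I mu, uniq s,
  (forall p, p \in s -> mu p.1 = p.2) &
  (forall p, p \in s -> rot_step I mu p (next s p))].
Proof.
case=> mu [st _ us /allP ps hz]; exists mu; split => //.
  by move=> p /ps /eqP.
exact: (zip_next hz).
Qed.

Section Elim.
Variables (mu : {perm 'I_n}) (s : seq ('I_n * 'I_n)).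
Hypotheses (st : stable I mu) (us : uniq s)
  (ps : forall p, p \in s -> mu p.1 = p.2)
  (rs : forall p, p \in s -> rot_step I mu p (next s p)).

Definition elimf x := if (x, mu x) \in s then (next s (x, mu x)).2 else mu x.

Lemma pair_form p : p \in s -> p = (p.1, mu p.1).
Proof. by case: p => a b /ps /= ->. Qed.

Lemma pair_eq2 p q : p \in s -> q \in s -> p.2 = q.2 -> p = q.
Proof.
move=> hp hq e; rewrite (pair_form hp) (pair_form hq) (ps hp) (ps hq) e.
suff -> : p.1 = q.1 by [].
by apply: (@perm_inj _ mu); rewrite (ps hp) (ps hq).
Qed.

Lemma step_of x : (x, mu x) \in s -> let d := (next s (x, mu x)).2 in
  [/\ PM x (mu x) < PM x d, PW d x < PW d ((mu^-1)%g d) &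
      forall w, PM x (mu x) < PM x w < PM x d -> ~~ (PW w x < PW w ((mu^-1)%g w))].
Proof.
move=> hx; have := rs hx; case: (next s (x, mu x)) => c d /=.
rewrite /rot_step /w_prefers_to_partner => /and3P [h1 h2 /forallP H]; split=> //.
by move=> w hw; have /implyP := H w; apply.
Qed.

Lemma elimf_inj : injective elimf.
Proof.
move=> x y; rewrite /elimf; case: ifP => hx; case: ifP => hy.
- move=> e; have := pair_eq2 (etrans (mem_next _ _) hx) (etrans (mem_next _ _) hy) e.
  by move/(can_inj (prev_next us)) => [].
- move=> e; have hq : next s (x, mu x) \in s by rewrite mem_next.
  have e1 : (next s (x, mu x)).1 = y.
    by apply: (@perm_inj _ mu); rewrite (ps hq) e.
  have := pair_form hq; rewrite e1 => ee.
  by rewrite ee hy in hq.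
- move=> e; have hq : next s (y, mu y) \in s by rewrite mem_next.
  have e1 : (next s (y, mu y)).1 = x.
    by apply: (@perm_inj _ mu); rewrite (ps hq) e.
  have := pair_form hq; rewrite e1 => ee.
  by rewrite ee hx in hq.
- exact: perm_inj.
Qed.

Lemma elim_stable (nu : {perm 'I_n}) : (forall x, nu x = elimf x) -> stable I nu.
Proof.
move=> hnu; have nb := stableP st.
apply/forallP => a; apply/forallP => b; apply/negP; rewrite /blocking.
move=> /andP [h1 h2].
set c := (nu^-1)%g b in h2; have nc : nu c = b by rewrite permKV.
have W : (PW b c <= PW b ((mu^-1)%g b)) /\
         ((c, mu c) \in s -> PW b c < PW b ((mu^-1)%g b)).
  case hc: ((c, mu c) \in s).
    have [_ hh _] := step_of hc.
    have e : (next s (c, mu c)).2 = b by rewrite -nc hnu /elimf hc.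
    by rewrite e in hh; split => //; apply: ltnW.
  have e : mu c = b by rewrite -nc hnu /elimf hc.
  by rewrite -e permK.
case ha: ((a, mu a) \in s); last first.
  have e : nu a = mu a by rewrite hnu /elimf ha.
  have := nb a b; rewrite /blocking -e h1 /=.
  case: W => W _; by rewrite (leq_trans h2 W).
have [s1 s2 s3] := step_of ha.
have ena : nu a = (next s (a, mu a)).2 by rewrite hnu /elimf ha.
rewrite ena in h1.
case: (ltngtP (PM a b) (PM a (mu a))) => hab.
- have := nb a b; rewrite /blocking hab /=.
  case: W => W _; by rewrite (leq_trans h2 W).
- have := s3 b; rewrite hab h1 => /(_ isT).
  case: W => W _; by rewrite (leq_trans h2 W).
- have ebm : b = mu a by apply: (@PM_inj _ I a).
  have hca : c != a.
    apply/eqP => eca; move: nc; rewrite eca ena => e.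
    by move: s1; rewrite e -ebm ltnn.
  case hc: ((c, mu c) \in s).
    case: W => _ /(_ hc); rewrite ebm permK => W.
    by move: h2; rewrite ebm => h2; move: (ltn_trans h2 W); rewrite ltnn.
  have : mu c = b by rewrite -nc hnu /elimf hc.
  by rewrite ebm => /perm_inj e; rewrite e eqxx in hca.
Qed.

Lemma elim_exists : exists nu : {perm 'I_n}, (forall x, nu x = elimf x) /\ stable I nu.
Proof.
exists (perm elimf_inj); have h : forall x, perm elimf_inj x = elimf x by move=> x; rewrite permE.
by split => //; apply: elim_stable.
Qed.

Lemma elim_next a b : (a, b) \in s -> elimf a = (next s (a, b)).2.
Proof. by move=> h; have e : mu a = b := ps h; rewrite /elimf e h. Qed.

Lemma elim_prev a b : (a, b) \in s -> exists c, elimf c = b /\ PW b c < PW b a.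
Proof.
move=> h; set p := prev s (a, b).
have hp : p \in s by rewrite mem_prev.
have np : next s p = (a, b) by rewrite next_prev.
exists p.1; have hp' := hp; rewrite (pair_form hp) in hp'.
have [_ h2 _] := step_of hp'.
rewrite -(pair_form hp) np /= in h2.
split; first by rewrite /elimf hp' -(pair_form hp) np.
have -> : a = (mu^-1)%g b by have e : mu a = b := ps h; rewrite -e permK.
done.
Qed.

Lemma dual_exposure a b : (a, b) \in s ->
  let q1 := next s (a, b) in
  forall x, PW q1.2 a < PW q1.2 x < PW q1.2 q1.1 -> ~~ (PM x q1.2 < PM x (elimf x)).
Proof.
move=> h q1 x /andP [hx1 hx2]; apply/negP => hb.
have nb := stableP st.
have hq : q1 \in s by rewrite mem_next.
have ea1 : q1.1 = (mu^-1)%g q1.2 by rewrite -(ps hq) permK.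
case hx: ((x, mu x) \in s); last first.
  move: hb; rewrite /elimf hx => hb.
  by have := nb x q1.2; rewrite /blocking hb -ea1 hx2.
move: hb; rewrite /elimf hx => hb.
have [s1 s2 s3] := step_of hx.
case: (ltngtP (PM x q1.2) (PM x (mu x))) => hab.
- by have := nb x q1.2; rewrite /blocking hab -ea1 hx2.
- by have := s3 q1.2; rewrite hab hb -ea1 hx2 => /(_ isT).
- have e : q1.2 = mu x by apply: (@PM_inj _ I x).
  move: hx2; rewrite ea1 e permK ltnn //.
Qed.

End Elim.

Lemma join_key (mu nu : {perm 'I_n}) : stable I mu -> stable I nu ->
  forall x, PM x (mu x) < PM x (nu x) ->
  forall z, z = (mu^-1)%g (nu x) -> PM z (mu z) < PM z (nu z).
Proof.
move=> stm stn; have nbm := stableP stm; have nbn := stableP stn.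
set P := [set x | PM x (mu x) < PM x (nu x)].
set Q := [set y | PW y ((nu^-1)%g y) < PW y ((mu^-1)%g y)].
have s1 : mu @: P \subset Q.
  apply/subsetP => y /imsetP [x]; rewrite inE => hx ->; rewrite inE permK.
  rewrite ltnNge; apply/negP => hle.
  have hne : x != (nu^-1)%g (mu x).
    apply/eqP => e; have e2 : nu x = mu x by rewrite [in LHS]e permKV.
    by move: hx; rewrite e2 ltnn.
  have hlt : PW (mu x) x < PW (mu x) ((nu^-1)%g (mu x)).
    rewrite ltn_neqAle hle andbT; apply: contra hne => /eqP e.
    by apply/eqP; apply: (@PW_inj _ I (mu x)).
  by have := nbn x (mu x); rewrite /blocking hx hlt.
have s2 : (nu^-1)%g @: Q \subset P.
  apply/subsetP => x /imsetP [y]; rewrite inE => hy ->; rewrite inE permKV.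
  set x' := (nu^-1)%g y in hy *.
  have := nbm x' y; rewrite /blocking hy andbT -leqNgt leq_eqVlt.
  case/orP => [/eqP e|//].
  have : mu x' = y by apply: (@PM_inj _ I x'); rewrite e.
  by move=> e'; move: hy; rewrite -e' permK ltnn.
have c1 := subset_leq_card s1; have c2 := subset_leq_card s2.
rewrite card_imset in c1; last exact: perm_inj.
rewrite card_imset in c2; last exact: perm_inj.
have eP : (nu^-1)%g @: Q = P.
  by apply/eqP; rewrite eqEcard s2 card_imset //; exact: perm_inj.
have eQ : mu @: P = Q.
  by apply/eqP; rewrite eqEcard s1 card_imset //; exact: perm_inj.
move=> x hx z ez.
have : x \in P by rewrite inE.
rewrite -eP => /imsetP [y hy ex].
have : nu x \in Q by rewrite ex permKV.
rewrite -eQ => /imsetP [z' hz' e].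
have -> : z = z' by rewrite ez e permK.
by move: hz'; rewrite inE.
Qed.

Lemma no_between (mu : {perm 'I_n}) m w' : stable I mu ->
  (forall w'', PM m (mu m) < PM m w'' < PM m w' -> ~~ (PW w'' m < PW w'' ((mu^-1)%g w''))) ->
  forall nu, stable I nu -> ~~ (PM m (mu m) < PM m (nu m) < PM m w').
Proof.
move=> stm hb nu stn; apply/negP => /andP [h1 h2].
have := hb (nu m); rewrite h1 h2 => /(_ isT) hnp.
set z := (mu^-1)%g (nu m); have hz := join_key stm stn h1 (erefl z).
have ez : mu z = nu m by rewrite /z permKV.
have hzm : z != m.
  by apply/eqP => e; move: h1; rewrite -ez e ltnn.
have hlt : PW (nu m) z < PW (nu m) m.
  rewrite ltn_neqAle; move: hnp; rewrite -leqNgt -/z => ->; rewrite andbT.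
  by apply: contra hzm => /eqP e; apply/eqP; apply: (@PW_inj _ I (nu m)).
have := stableP stn z (nu m); rewrite /blocking -ez hz /=.
by rewrite ez permK hlt.
Qed.

End Rot.

Section Succ.
Variables (n : nat) (I : SMI n).
Variables (mu1 mu2 : {perm 'I_n}) (s1 s2 : seq ('I_n * 'I_n)).
Hypotheses (st1 : stable I mu1) (us1 : uniq s1)
  (ps1 : forall p, p \in s1 -> mu1 p.1 = p.2)
  (rs1 : forall p, p \in s1 -> rot_step I mu1 p (next s1 p)).
Hypotheses (st2 : stable I mu2) (us2 : uniq s2)
  (ps2 : forall p, p \in s2 -> mu2 p.1 = p.2)
  (rs2 : forall p, p \in s2 -> rot_step I mu2 p (next s2 p)).

Lemma succ_half a : (a, mu1 a) \in s1 -> (a, mu2 a) \in s2 -> mu1 a = mu2 a ->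
  let N1 := next s1 (a, mu1 a) in let N2 := next s2 (a, mu2 a) in
  ~~ (PM I a N1.2 < PM I a N2.2) /\
  (N1.2 = N2.2 -> ~~ (PW I N1.2 N2.1 < PW I N1.2 N1.1)).
Proof.
move=> h1 h2 e N1 N2.
have [nu1 [hnu1 stn1]] := elim_exists st1 us1 ps1 rs1.
have en1 : nu1 a = N1.2 by rewrite hnu1 /elimf h1.
have [a1 a2 a3] := step_of rs1 h1.
have [b1 b2 b3] := step_of rs2 h2.
split.
  apply/negP => hlt.
  have := no_between st2 b3 stn1; rewrite en1 -e => /negP; apply.
  by apply/andP; split; [exact: a1 | move: hlt; rewrite /N2 e].
move=> e12; apply/negP => hlt.
have hN1 : N1 \in s1 by rewrite mem_next.
have hN2 : N2 \in s2 by rewrite mem_next.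
have eN1 : N1.1 = (mu1^-1)%g N1.2 by rewrite -(ps1 hN1) permK.
have eN2 : N2.1 = (mu2^-1)%g N2.2 by rewrite -(ps2 hN2) permK.
set J := swapI I.
have stJ : stable J (nu1^-1)%g by rewrite stable_swap.
have stJ2 : stable J (mu2^-1)%g by rewrite stable_swap.
have ea : (nu1^-1)%g N1.2 = a by rewrite -en1 permK.
have hbJ : forall x, PM J N1.2 ((nu1^-1)%g N1.2) < PM J N1.2 x < PM J N1.2 N1.1 ->
   ~~ (PW J x N1.2 < PW J x (((nu1^-1)^-1)%g x)).
  move=> x; rewrite ea invgK hnu1; move: (dual_exposure st1 ps1 rs1 h1).
  by move=> H; apply: H.
have := no_between stJ hbJ stJ2.
rewrite ea => /negP; apply.
change (PW I N1.2 a < PW I N1.2 ((mu2^-1)%g N1.2) < PW I N1.2 N1.1).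
rewrite e12 -eN2 -e12 hlt andbT.
have : PW I N2.2 a < PW I N2.2 N2.1 by rewrite eN2.
by rewrite -e12.
Qed.

End Succ.

Lemma succ_same n (I : SMI n) mu1 mu2 s1 s2 :
  stable I mu1 -> uniq s1 -> (forall p, p \in s1 -> mu1 p.1 = p.2) ->
  (forall p, p \in s1 -> rot_step I mu1 p (next s1 p)) ->
  stable I mu2 -> uniq s2 -> (forall p, p \in s2 -> mu2 p.1 = p.2) ->
  (forall p, p \in s2 -> rot_step I mu2 p (next s2 p)) ->
  forall q, q \in s1 -> q \in s2 -> next s1 q = next s2 q.
Proof.
move=> st1 us1 ps1 rs1 st2 us2 ps2 rs2 [a b] h1 h2.
have e1 : mu1 a = b := ps1 _ h1.
have e2 : mu2 a = b := ps2 _ h2.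
have h1' : (a, mu1 a) \in s1 by rewrite e1.
have h2' : (a, mu2 a) \in s2 by rewrite e2.
have e : mu1 a = mu2 a by rewrite e1 e2.
have [c1 d1] := succ_half st1 us1 ps1 rs1 st2 ps2 rs2 h1' h2' e.
have [c2 d2] := succ_half st2 us2 ps2 rs2 st1 ps1 rs1 h2' h1' (esym e).
rewrite -{1}e1 -e2.
set N1 := next s1 (a, mu1 a) in c1 d1 c2 d2 *.
set N2 := next s2 (a, mu2 a) in c1 d1 c2 d2 *.
have eb : N1.2 = N2.2.
  apply: (@PM_inj _ I a); move: c1 c2; case: ltngtP => //.
have ea : N1.1 = N2.1.
  apply: (@PW_inj _ I N1.2); move: (d1 eb) (d2 (esym eb)); rewrite -eb.
  by case: ltngtP.
by case: N1 N2 eb ea {c1 d1 c2 d2} => [x y] [x' y'] /= -> ->.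
Qed.

Lemma next_step (T : eqType) (p : T) t j : uniq (p :: t) -> j <= size t ->
  next (p :: t) (nth p (p :: t) j) = nth p t j.
Proof.
move=> u hj; rewrite next_nth mem_nth ?ltnS // index_uniq ?ltnS //.
Qed.

Lemma nth_iter (T : eqType) (p : T) t : uniq (p :: t) ->
  forall j, j <= size t -> nth p (p :: t) j = iter j (next (p :: t)) p.
Proof.
move=> u; elim=> [|j IH] hj //.
rewrite iterS -IH ?(ltnW hj) // next_step // ltnW //.
Qed.

Lemma iter_back (T : eqType) (p : T) t : uniq (p :: t) ->
  iter (size t).+1 (next (p :: t)) p = p.
Proof.
move=> u; rewrite iterS -nth_iter // next_step // nth_default //.
Qed.

Lemma same_cycle (T : eqType) (s1 s2 : seq T) p : uniq s1 -> uniq s2 ->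
  p \in s1 -> p \in s2 ->
  (forall q, q \in s1 -> q \in s2 -> next s1 q = next s2 q) ->
  exists2 i, i <= size s1 & rot i s1 = s2.
Proof.
move=> u1 u2 h1 h2 hn.
have [i1 t1 e1] := rot_to h1.
have [i2 t2 e2] := rot_to h2.
have uc1 : uniq (p :: t1) by rewrite -e1 rot_uniq.
have uc2 : uniq (p :: t2) by rewrite -e2 rot_uniq.
have n1 : next (p :: t1) =1 next s1 by rewrite -e1; apply: next_rot.
have n2 : next (p :: t2) =1 next s2 by rewrite -e2; apply: next_rot.
have gg : forall j, iter j (next s1) p = iter j (next s2) p /\
                    iter j (next s1) p \in s1 /\ iter j (next s1) p \in s2.
  elim=> [|j [IH1 [IH2 IH3]]]; first by [].
  rewrite !iterS.
  have e : next s1 (iter j (next s1) p) = next s2 (iter j (next s2) p).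
    by rewrite -IH1 hn.
  split; first exact: e.
  split; first by rewrite mem_next.
  by rewrite e mem_next -IH1.
have g1 : forall j, iter j (next s1) p = iter j (next (p :: t1)) p.
  by move=> j; apply: eq_iter => x; rewrite n1.
have g2 : forall j, iter j (next s2) p = iter j (next (p :: t2)) p.
  by move=> j; apply: eq_iter => x; rewrite n2.
have esz : size t1 = size t2.
  case: (ltngtP (size t1) (size t2)) => // hlt.
  - have := iter_back uc1; rewrite -g1; case: (gg (size t1).+1) => -> _.
    rewrite g2 -nth_iter // => e.
    have := @nth_uniq _ p (p :: t2) 0 (size t1).+1 (ltn0Sn _) (hlt : (size t1).+1 < (size t2).+1) uc2.
    by rewrite e /= eqxx.
  - have := iter_back uc2; rewrite -g2; case: (gg (size t2).+1) => <- _.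
    rewrite g1 -nth_iter // => e.
    have := @nth_uniq _ p (p :: t1) 0 (size t2).+1 (ltn0Sn _) (hlt : (size t2).+1 < (size t1).+1) uc1.
    by rewrite e /= eqxx.
have ec : p :: t1 = p :: t2.
  apply: (eq_from_nth (x0 := p)); first by rewrite /= esz.
  move=> j; rewrite /= ltnS => hj.
  rewrite nth_iter // -g1; case: (gg j) => -> _; rewrite g2 -nth_iter //.
  by rewrite -esz.
exists (rot_add s1 i1 (size (rot i1 s1) - i2)); first exact: leq_rot_add.
rewrite -rot_rot_add.
have : rot i1 s1 = rot i2 s2 by rewrite e1 e2 ec.
by move=> ->; rewrite size_rot -(size_rot i2 s2) -/(rotr i2 (rot i2 s2)) rotK.
Qed.

Lemma rot_share n (I : SMI n) s1 s2 p : is_rotation I s1 -> is_rotation I s2 ->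
  p \in s1 -> p \in s2 -> same_rotation s1 s2.
Proof.
move=> /rotP [mu1 [st1 us1 ps1 rs1]] /rotP [mu2 [st2 us2 ps2 rs2]] h1 h2.
have [i hi e] := same_cycle us1 us2 h1 h2 (succ_same st1 us1 ps1 rs1 st2 us2 ps2 rs2).
apply/existsP; exists (Ordinal (hi : i < (size s1).+1)); by rewrite e.
Qed.

Lemma count_seq (T : eqType) (rs : seq T) (g : T -> nat) N (R : rel T) :
  (forall s1 s2, s1 \in rs -> s2 \in rs -> g s1 = g s2 -> R s1 s2) ->
  pairwise (fun a b => ~~ R a b) rs -> (forall s, s \in rs -> g s < N) ->
  size rs <= N.
Proof.
move=> hR hp hN.
have -> : N = size (iota 0 N) by rewrite size_iota.
rewrite -(size_map g); apply: uniq_leq_size.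
  rewrite uniq_pairwise pairwise_map.
  have hall : all (mem rs) rs by apply/allP.
  apply: (@sub_in_pairwise _ (mem rs) (fun a b => ~~ R a b) _ _ rs hall hp).
  move=> a b ha hb /= hnr; apply/eqP => e; by rewrite (hR _ _ ha hb e) in hnr.
move=> v /mapP [s hs ->]; rewrite mem_iota /= add0n; exact: hN.
Qed.

Lemma count_rot_man n (I : SMI n) k : 0 < k -> k_range I k ->
  forall (m : 'I_n) (rs : seq (seq ('I_n * 'I_n))),
  (forall s, s \in rs -> is_rotation I s /\ m \in map fst s) ->
  pairwise (fun s1 s2 => ~~ same_rotation s1 s2) rs ->
  size rs <= 5 * k - 5.
Proof.
move=> k0 hk m rs hrs hp.
have [wof inw] : exists wof : seq ('I_n * 'I_n) -> 'I_n,
    forall s, m \in map fst s -> (m, wof s) \in s.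
  exists (fun s => (nth (m, m) s (index m (map fst s))).2).
  move=> s hm; set i := index m (map fst s).
  have hi : i < size s by rewrite -(size_map fst) index_mem.
  have e : (nth (m, m) s i).1 = m.
    by rewrite -(nth_map _ m) // nth_index.
  rewrite -/i; move: (mem_nth (m, m) hi) e.
  by case: (nth (m, m) s i) => a b /= h e; rewrite -e.
have facts : forall s, s \in rs ->
    minrankM I m <= PM I m (wof s) + (k - 1) + (k - 1) /\
    PM I m (wof s) < minrankM I m + (k - 1) + (k - 1).
  move=> s /hrs [hr hm]; have hin := inw s hm.
  have [mu [st us ps rs']] := rotP hr.
  have emu : mu m = wof s := ps _ hin.
  have hin' : (m, mu m) \in s by rewrite emu.
  have [nu [hnu stn]] := elim_exists st us ps rs'.
  have [a1 _ _] := step_of rs' hin'.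
  have enu : nu m = (next s (m, mu m)).2 by rewrite hnu /elimf hin'.
  move: a1; rewrite -enu => a1.
  have := window hk st m; have := window hk stn m.
  move: a1; rewrite emu; move: (nu m) => d.
  move=> ? [? ?] [? ?]; split; lia.
apply: (@count_seq _ rs (fun s => PM I m (wof s) + (k - 1) + (k - 1) - minrankM I m)
          _ (fun s1 s2 => same_rotation s1 s2)).
- move=> s1 s2 h1 h2 e.
  have := facts _ h1; have := facts _ h2 => f2 f1.
  have ew : wof s1 = wof s2 by apply: (@PM_inj _ I m); lia.
  have [r1 m1] := hrs _ h1; have [r2 m2] := hrs _ h2.
  apply: (rot_share r1 r2 (inw _ m1)); rewrite ew; exact: inw.
- exact: hp.
- move=> s hs; have := facts _ hs; lia.
Qed.

Lemma count_rot_woman n (I : SMI n) k : 0 < k -> k_range I k ->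
  forall (w : 'I_n) (rs : seq (seq ('I_n * 'I_n))),
  (forall s, s \in rs -> is_rotation I s /\ w \in map snd s) ->
  pairwise (fun s1 s2 => ~~ same_rotation s1 s2) rs ->
  size rs <= 5 * k - 5.
Proof.
move=> k0 hk w rs hrs hp.
have [mof inm] : exists mof : seq ('I_n * 'I_n) -> 'I_n,
    forall s, w \in map snd s -> (mof s, w) \in s.
  exists (fun s => (nth (w, w) s (index w (map snd s))).1).
  move=> s hm; set i := index w (map snd s).
  have hi : i < size s by rewrite -(size_map snd) index_mem.
  have e : (nth (w, w) s i).2 = w.
    by rewrite -(nth_map _ w) // nth_index.
  rewrite -/i; move: (mem_nth (w, w) hi) e.
  by case: (nth (w, w) s i) => a b /= h e; rewrite -e.
have facts : forall s, s \in rs ->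
    minrankW I w < PW I w (mof s) + (k - 1) + (k - 1) /\
    PW I w (mof s) <= minrankW I w + (k - 1) + (k - 1).
  move=> s /hrs [hr hm]; have hin := inm s hm.
  have [mu [st us ps rs']] := rotP hr.
  have emu : mu (mof s) = w := ps _ hin.
  have [nu [hnu stn]] := elim_exists st us ps rs'.
  have [c [ec hc]] := elim_prev us ps rs' hin.
  have enu : (nu^-1)%g w = c by rewrite -ec -hnu permK.
  have emu' : (mu^-1)%g w = mof s by rewrite -emu permK.
  have := window_w hk st w; have := window_w hk stn w; rewrite enu emu'.
  lia.
apply: (@count_seq _ rs (fun s => PW I w (mof s) + (k - 1) + (k - 1) - minrankW I w - 1)
          _ (fun s1 s2 => same_rotation s1 s2)).
- move=> s1 s2 h1 h2 e.
  have := facts _ h1; have := facts _ h2 => f2 f1.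
  have ew : mof s1 = mof s2 by apply: (@PW_inj _ I w); lia.
  have [r1 m1] := hrs _ h1; have [r2 m2] := hrs _ h2.
  apply: (rot_share r1 r2 (inm _ m1)); rewrite ew; exact: inm.
- exact: hp.
- move=> s hs; have := facts _ hs; lia.
Qed.

Theorem corollary7p5 (n k : nat) (I : SMI n) :
  0 < k -> k_range I k ->
  (forall m : 'I_n, #|stable_partners_of_man I m| <= 5 * k - 4) /\
  (forall w : 'I_n, #|stable_partners_of_woman I w| <= 5 * k - 4) /\
  (forall (m : 'I_n) (rs : seq (seq ('I_n * 'I_n))),
     (forall s, s \in rs -> is_rotation I s /\ m \in map fst s) ->
     pairwise (fun s1 s2 => ~~ same_rotation s1 s2) rs ->
     size rs <= 5 * k - 5) /\
  (forall (w : 'I_n) (rs : seq (seq ('I_n * 'I_n))),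
     (forall s, s \in rs -> is_rotation I s /\ w \in map snd s) ->
     pairwise (fun s1 s2 => ~~ same_rotation s1 s2) rs ->
     size rs <= 5 * k - 5).
Proof.
move=> k0 hk; split; first exact: count_man.
split; first exact: count_woman.
split; first exact: count_rot_man.
exact: count_rot_woman.
Qed.
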